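(* Let $m$ and $n$ be non-negative integers with $m+n\ge1$. Then the rational number $$\binom{m+n}{m}\binom{n+1}{m}\binom{2n}{n}\frac{3m^2+n^2+m+n}{(m+n)(n+1)}$$ is an integer divisible by $m+n+1$.
   Context: Binomial coefficients $\binom{a}{b}$ with $b>a\ge 0$ are zero. *)

(* Defs.v *)
From HB Require Import structures.
From mathcomp Require Import all_boot all_order all_algebra.
Set Implicit Arguments. Unset Strict Implicit. Unset Printing Implicit Defensive.
Import Order.TTheory GRing.Theory Num.Theory.
Local Open Scope ring_scope.

Definition lemma3_val (m n : nat) : rat :=
  ('C(m + n, m) * 'C(n.+1, m) * 'C(2 * n, n))%:R
  * ((3 * m ^ 2 + n ^ 2 + m + n)%:R / ((m + n) * n.+1)%:R).

(* Main.v *)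
Require Import Defs.
From HB Require Import structures.
From mathcomp Require Import all_boot all_order all_algebra.
From mathcomp Require Import ring lra zify.
Import GRing.Theory Num.Theory.
Local Open Scope ring_scope.

Lemma binR (N k : nat) : (k <= N)%N ->
  ('C(N, k)%:R : rat) = N`!%:R / (k`!%:R * (N - k)`!%:R).
Proof.
move=> hk; rewrite -(bin_fact hk) !natrM mulfK //.
by rewrite mulf_neq0 // pnatr_eq0 -lt0n fact_gt0.
Qed.

Lemma factR_neq0 (N : nat) : (N`!%:R : rat) != 0.
Proof. by rewrite pnatr_eq0 -lt0n fact_gt0. Qed.

Lemma r6 (m n : nat) : (m <= n)%N ->
  ('C(2 * n, n + m)%:R * 'C(n + m, m)%:R : rat) = 'C(2 * n, n)%:R * 'C(n, m)%:R.
Proof.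
move=> hmn.
rewrite !binR; try lia.
have -> : (2 * n - (n + m) = n - m)%N by lia.
have -> : (n + m - m = n)%N by lia.
have -> : (2 * n - n = n)%N by lia.
have := factR_neq0 n; have := factR_neq0 m; have := factR_neq0 (n - m);
have := factR_neq0 (n + m).
by move=> *; field; rewrite ?mulf_neq0 //; apply/and4P.
Qed.

Lemma main_case (m n : nat) : (0 < m)%N -> (m <= n)%N ->
  lemma3_val m n = ((m + n + 1)%:Z *
   (('C(m + n, m) ^ 2 * 'C(2 * n - 1, n + m - 1))%:Z
    - ('C(m + n, m) ^ 2 * 'C(2 * n - 1, n + m + 1))%:Z
    + (2 * 'C(m + n - 1, m - 1) ^ 2 * 'C(2 * n, n + m - 1))%:Z
    - (2 * 'C(m + n - 1, m - 1) * 'C(m + n - 1, m) * 'C(2 * n, n + m - 1))%:Z))%:~R.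
Proof.
move=> hm hmn.
set A := 'C(m + n, m); set a := 'C(m + n - 1, m - 1); set b := 'C(m + n - 1, m).
set E := 'C(2 * n - 1, n + m - 1); set G := 'C(2 * n - 1, n + m + 1).
set D2 := 'C(2 * n, n + m - 1); set H := 'C(2 * n, n + m).
set Cnm := 'C(n, m); set C2n := 'C(2 * n, n); set Cn1 := 'C(n.+1, m).
have r1 : (m * A = (m + n) * a)%N.
  have := mul_bin_diag (m + n) (m - 1).
  have -> : (m - 1).+1 = m by lia.
  by have -> : (m + n).-1 = (m + n - 1)%N by lia.
have r2 : (m * b = n * a)%N.
  have := mul_bin_left (m + n - 1) (m - 1).
  have -> : (m - 1).+1 = m by lia.
  by have -> : (m + n - 1 - (m - 1) = n)%N by lia.
have r3 : (2 * n * E = (n + m) * H)%N.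
  have := mul_bin_diag (2 * n) (n + m - 1).
  have -> : (n + m - 1).+1 = (n + m)%N by lia.
  by have -> : (2 * n).-1 = (2 * n - 1)%N by lia.
have r4 : ((n + m) * H = (n + 1 - m) * D2)%N.
  have := mul_bin_left (2 * n) (n + m - 1).
  have -> : (n + m - 1).+1 = (n + m)%N by lia.
  by have -> : (2 * n - (n + m - 1) = n + 1 - m)%N by lia.
have r7 : ((n + 1) * Cnm = (n + 1 - m) * Cn1)%N.
  have := mul_bin_down n.+1 m.
  by rewrite -pred_Sn addn1.
have r6' : ('C(2 * n, n + m)%:R * A%:R : rat) = C2n%:R * Cnm%:R.
  by rewrite /A [(m + n)%N]addnC r6.
have r5 : (((n + m + 1) * (n + m))%:R * G%:R : rat) = (n%:R - m%:R) * (n%:R - m%:R - 1) * E%:R.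
  have [lt|gt|eq] := ltngtP m n; last first.
  - by rewrite /G eq bin_small ?subrr ?mul0r ?mulr0 //; lia.
  - by lia.
  have h1 := mul_bin_left (2 * n - 1) (n + m).
  have h2 := mul_bin_left (2 * n - 1) (n + m - 1).
  have e1 : (n + m).+1 = (n + m + 1)%N by lia.
  have e2 : (n + m - 1).+1 = (n + m)%N by lia.
  rewrite e1 -/G in h1; rewrite e2 -/E in h2.
  have e3 : (2 * n - 1 - (n + m) = n - m - 1)%N by lia.
  have e4 : (2 * n - 1 - (n + m - 1) = n - m)%N by lia.
  rewrite e3 in h1; rewrite e4 in h2.
  have : ((n + m + 1) * (n + m) * G = (n - m - 1) * (n - m) * E)%N.
    by rewrite mulnAC mulnC h1 mulnCA h2 mulnA.
  move/(congr1 (fun x => x%:R : rat)); rewrite !natrM !natrB; try lia.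
  move=> ->; ring.
have mR0 : (m%:R : rat) != 0 by rewrite pnatr_eq0 -lt0n.
have nR0 : (n%:R : rat) != 0 by rewrite pnatr_eq0 -lt0n; lia.
have k0 : ((n + 1 - m)%:R : rat) != 0 by rewrite pnatr_eq0 -lt0n; lia.
have mn0 : ((m + n)%:R : rat) != 0 by rewrite pnatr_eq0 -lt0n; lia.
have nm0 : ((n + m)%:R : rat) != 0 by rewrite pnatr_eq0 -lt0n; lia.
have nm10 : ((n + m + 1)%:R : rat) != 0 by rewrite pnatr_eq0 -lt0n; lia.
have n10 : ((n + 1)%:R : rat) != 0 by rewrite pnatr_eq0 -lt0n; lia.
have c0 : (Cnm%:R : rat) != 0 by rewrite pnatr_eq0 -lt0n bin_gt0.
have eA : (A%:R : rat) = (m + n)%:R * a%:R / m%:R.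
  by apply: (mulfI mR0); rewrite -[LHS]natrM r1 natrM; field.
have eb : (b%:R : rat) = n%:R * a%:R / m%:R.
  by apply: (mulfI mR0); rewrite -[LHS]natrM r2 natrM; field.
have eE : (E%:R : rat) = (n + m)%:R * H%:R / (2 * n)%:R.
  have n20 : ((2 * n)%:R : rat) != 0 by rewrite pnatr_eq0 -lt0n; lia.
  by apply: (mulfI n20); rewrite -[LHS]natrM r3 natrM; field.
have eD2 : (D2%:R : rat) = (n + m)%:R * H%:R / (n + 1 - m)%:R.
  by apply: (mulfI k0); rewrite -[LHS]natrM -r4 natrM; field.
have eCn1 : (Cn1%:R : rat) = (n + 1)%:R * Cnm%:R / (n + 1 - m)%:R.
  by apply: (mulfI k0); rewrite -[LHS]natrM -r7 natrM; field.
have eG : (G%:R : rat) = (n%:R - m%:R) * (n%:R - m%:R - 1) * E%:R / ((n + m + 1) * (n + m))%:R.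
  have p0 : (((n + m + 1) * (n + m))%:R : rat) != 0 by rewrite natrM; apply: mulf_neq0.
  by apply: (mulfI p0); rewrite r5 [RHS]mulrC divfK.
have eC2n : (C2n%:R : rat) = H%:R * A%:R / Cnm%:R.
  by apply: (mulIf c0); rewrite -r6'; field.
rewrite /lemma3_val -/A -/Cn1 -/C2n.
rewrite intrM !intrD !intrN -!pmulrn !natrM ?natrX.
rewrite eCn1 eC2n eG eE eD2 eb eA.
rewrite natrB in k0 *; last by lia.
rewrite !natrD !natrM in nm0 nm10 mn0 n10 k0 *.
have h2n : (n%:R + n%:R : rat) != 0 by rewrite -natrD pnatr_eq0 -lt0n; lia.
have h1n : (1 + n%:R : rat) != 0 by rewrite addrC.
by field; rewrite k0 mR0 nm0 nm10 h2n h1n c0.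
Qed.

Lemma big_case (m n : nat) : (n.+1 < m)%N -> lemma3_val m n = ((m + n + 1)%:Z * 0)%:~R.
Proof.
move=> h; rewrite /lemma3_val (bin_small h) muln0 mul0n.
by rewrite mulr0 mul0r.
Qed.

Lemma diag_case (n : nat) :
  lemma3_val n.+1 n = ((n.+1 + n + 1)%:Z *
    ((2 * 'C(2 * n, n) * 'C(2 * n, n))%:Z - (2 * 'C(2 * n, n) * 'C(2 * n, n.+1))%:Z))%:~R.
Proof.
set c := 'C(2 * n, n); set d := 'C(2 * n, n.+1).
have r1 : ((2 * n).+1 * c = n.+1 * 'C((2 * n).+1, n.+1))%N by exact: mul_bin_diag.
have r2 : (n.+1 * d = n * c)%N.
  have := mul_bin_left (2 * n) n.
  by have -> : (2 * n - n = n)%N by lia.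
rewrite /lemma3_val binn muln1.
have -> : (n.+1 + n = (2 * n).+1)%N by lia.
have n10 : (n.+1%:R : rat) != 0 by rewrite pnatr_eq0.
have e1 : ('C((2 * n).+1, n.+1)%:R : rat) = (2 * n).+1%:R * c%:R / n.+1%:R.
  by apply: (mulfI n10); rewrite -[LHS]natrM -r1 natrM [RHS]mulrC divfK.
have e2 : (d%:R : rat) = n%:R * c%:R / n.+1%:R.
  by apply: (mulfI n10); rewrite -[LHS]natrM r2 natrM [RHS]mulrC divfK.
rewrite intrM intrD intrN -!pmulrn !natrM ?natrX e1 e2.
have h2 : ((2 * n).+1%:R : rat) != 0 by rewrite pnatr_eq0.
rewrite -natr1 natrM in h2; rewrite -natr1 in n10.
rewrite ?natrD ?natrM ?natrX -?natr1.
by field; rewrite n10 h2.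
Qed.

Lemma zero_case (n : nat) : (0 < n)%N ->
  lemma3_val 0 n = ((0 + n + 1)%:Z * ('C(2 * n, n)%:Z - 'C(2 * n, n.+1)%:Z))%:~R.
Proof.
move=> hn.
set c := 'C(2 * n, n); set d := 'C(2 * n, n.+1).
have r2 : (n.+1 * d = n * c)%N.
  have := mul_bin_left (2 * n) n.
  by have -> : (2 * n - n = n)%N by lia.
rewrite /lemma3_val !bin0 !mul1n add0n.
have n10 : (n.+1%:R : rat) != 0 by rewrite pnatr_eq0.
have nR0 : (n%:R : rat) != 0 by rewrite pnatr_eq0 -lt0n.
have e2 : (d%:R : rat) = n%:R * c%:R / n.+1%:R.
  by apply: (mulfI n10); rewrite -[LHS]natrM r2 natrM [RHS]mulrC divfK.
rewrite intrM intrD intrN -!pmulrn e2.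
rewrite -natr1 in n10.
rewrite ?natrD ?natrM ?natrX -?natr1.
by field; rewrite n10 nR0.
Qed.

Theorem lemma3 (m n : nat) (hmn : (1 <= m + n)%N) :
  exists k : int, lemma3_val m n = ((m + n + 1)%:Z * k)%:~R.
Proof.
have [big|small] := ltnP n.+1 m.
  by eexists; apply: big_case.
case: (ltngtP m n.+1) small => // [lt _ | -> _]; last first.
  by eexists; apply: diag_case.
case: m lt hmn => [|m] lt hmn.
  by eexists; apply: zero_case.
by eexists; apply: main_case.
Qed.
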